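(* Let $D$, $S$, $\nu$, $\alpha_1,\alpha_2,r_1$, $\lambda$, $s$, the families $\mathcal{F}_i$, the points $z_{i,j}$, the functions $\phi_{i,j}$, the coefficients $\beta_{i,j}$ and the functions $g_i$ be as described in the context. For each sufficiently small $\eta > 0$ there are $m, r > 0$ with $0 < \lambda r < r_1$, such that for each $i$, $1 \leq i \leq 2s$, the following hold for the family of balls $\mathcal{F}_i$ (chosen for this $r$) and for the functions $g_i$ (defined with this $m$): (a) If a point $z \in S$ lies in no ball in $\mathcal{F}_i$, then $|g_i(z)| < \eta$. (b) If $z \in \overline{D} \cap \mathbb{B}(z_{i,j}, \lambda r)$ for some $j$, then $|g_i(z) - \beta_{i,j}\phi_{i,j}(z)| < \eta$. (c) If $z \in S \cap \mathbb{B}(z_{i,j}, r)$ for some $j$, then $|\phi_{i,j}(z)| \geq C\eta^{\frac{1}{16}}$, where the constant $C$ is independent of $r$, $m$ and $\eta$. (d) If $z \in \overline{D} \cap b\mathbb{B}(z_{i,j}, \lambda r)$ for some $j$, then $|\phi_{i,j}(z)| < \eta^{\frac{2}{3}}$. Moreover, we can choose $r > 0$ arbitrarily small and make $m > 0$ as large as we want.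
   Context: $D$ is a bounded strictly convex domain with $\mathcal{C}^2$-boundary in $\mathbb{C}^n$, $S = bD$ its boundary, and $\nu(w)$ the outward unit normal to $S$ at $w \in S$. $\langle\cdot,\cdot\rangle$, $\|\cdot\|$, $\mathrm{dist}$ denote the Hermitian inner product, norm and distance in $\mathbb{C}^n$, and $\mathbb{B}(a,r)$ the open ball of radius $r$ centered at $a$. The constants $\alpha_1, \alpha_2, r_1 > 0$ satisfy: $\Re\langle w - z, \nu(w)\rangle \geq \alpha_1\|z-w\|^2$ for all $w \in S$, $z \in \overline{D}$ with $\mathrm{dist}(z, bD) < r_1$, and $\Re\langle w - z, \nu(w)\rangle \leq \alpha_2\|z-w\|^2$ for all $z, w \in S$. Set $\lambda = 4\sqrt{\alpha_2/\alpha_1}$. The positive integer $s$ is such that for each $r > 0$ there are $s$ families of balls $\mathcal{F}_1, \dots, \mathcal{F}_s$, $\mathcal{F}_i = \{\mathbb{B}(z_{i,j}, \lambda r) : 1 \leq j \leq N_i\}$, with centers $z_{i,j} \in S$, such that the balls in each family are pairwise disjoint and $S \subset \bigcup_{i=1}^s\bigcup_{j=1}^{N_i}\mathbb{B}(z_{i,j}, r)$. For $1 \leq i \leq s$, $1\le j\le N_i$, set $z_{i+s,j} = z_{i,j}$ and $\mathcal{F}_{i+s} = \mathcal{F}_i$. For $m > 0$, $1 \leq i \leq 2s$, $1 \leq j \leq N_i$, define $\phi_{i,j}(z) = e^{-m\langle z_{i,j} - z, \nu(z_{i,j})\rangle}$, and for given complex numbers $\beta_{i,j}$ with $|\beta_{i,j}|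 \leq 1$ let $g_i(z) = \sum_{j=1}^{N_i}\beta_{i,j}\phi_{i,j}(z)$ (an entire function). *)

(* Defs.v *)
From HB Require Import structures.
From mathcomp Require Import all_boot all_order all_algebra.
From mathcomp Require Import complex.
From mathcomp Require Import all_classical all_reals all_analysis.
Set Implicit Arguments.
Unset Strict Implicit.
Unset Printing Implicit Defensive.
Import Order.TTheory GRing.Theory Num.Theory.
Import numFieldNormedType.Exports.
Local Open Scope classical_set_scope.
Local Open Scope ring_scope.
Local Open Scope complex_scope.

Notation Cn R n := ('rV[R]_n * 'rV[R]_n)%type.

Section Defs.
Variable R : realType.

(* C^n realified: z = (x, y) with complex coordinates z_k = x_k + i y_k.
   The product of two row spaces carries MathComp-Analysis' normed/topological
   structure (the product topology = the usual topology of C^n = R^(2n)). *)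

Variable n : nat.

Definition ccoord (z : Cn R n) (k : 'I_n) : R[i] := (z.1 0 k) +i* (z.2 0 k).

Definition hprod (z w : Cn R n) : R[i] := \sum_(k < n) ccoord z k * (ccoord w k)^*.

Definition hnorm (z : Cn R n) : R :=
  Num.sqrt (\sum_(k < n) ((z.1 0 k) ^+ 2 + (z.2 0 k) ^+ 2)).

Definition cabs (c : R[i]) : R := Num.sqrt (complex.Re c ^+ 2 + complex.Im c ^+ 2).

Definition cexp (c : R[i]) : R[i] :=
  (expR (complex.Re c) * cos (complex.Im c)) +i* (expR (complex.Re c) * sin (complex.Im c)).

Definition hball (a : Cn R n) (r : R) : set (Cn R n) := [set z | hnorm (z - a) < r].
Definition hsphere (a : Cn R n) (r : R) : set (Cn R n) := [set z | hnorm (z - a) = r].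

Definition bdry (A : set (Cn R n)) : set (Cn R n) := topology_structure.closure A `\` interior A.

Definition is_domain (D : set (Cn R n)) : Prop := D !=set0 /\ open D /\ connected D.

Definition hbounded (D : set (Cn R n)) : Prop := exists M : R, forall z, D z -> hnorm z <= M.

Definition convex_set_Cn (D : set (Cn R n)) : Prop :=
  forall x y, D x -> D y -> forall t : R, 0 <= t <= 1 -> D ((1 - t) *: x + t *: y).

Definition strictly_convex (D : set (Cn R n)) : Prop :=
  convex_set_Cn D /\
  forall x y, topology_structure.closure D x -> topology_structure.closure D y -> x != y ->
    forall t : R, 0 < t < 1 -> D ((1 - t) *: x + t *: y).

Definition C2_on (U : set (Cn R n)) (f : Cn R n -> R) : Prop :=
  (forall x, U x -> {for x, continuous f}) /\
  forall u v : Cn R n,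
    (forall x, U x -> derivable f x v /\ derivable ('D_v f) x u) /\
    (forall x, U x -> {for x, continuous ('D_v f)}) /\
    (forall x, U x -> {for x, continuous ('D_u ('D_v f))}).

Definition ex (k : 'I_n) : Cn R n := (delta_mx 0 k, 0).
Definition ey (k : 'I_n) : Cn R n := (0, delta_mx 0 k).

Definition grad (f : Cn R n -> R) (w : Cn R n) : Cn R n :=
  (\row_k derive f w (ex k), \row_k derive f w (ey k)).

Definition C2_boundary_outward_normal (D : set (Cn R n)) (nu : Cn R n -> Cn R n) : Prop :=
  exists (U : set (Cn R n)) (rho : Cn R n -> R),
    open U /\ bdry D `<=` U /\ C2_on U rho /\
    (forall x, U x -> (D x <-> rho x < 0)) /\
    (forall w, bdry D w -> grad rho w != 0 /\ nu w = (hnorm (grad rho w))^-1 *: grad rho w).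

Definition ball_families (S : set (Cn R n)) (s : nat) (lam r : R)
  (N : 'I_s -> nat) (zc : forall i : 'I_s, 'I_(N i) -> Cn R n) : Prop :=
  (forall i j, S (zc i j)) /\
  (forall i (j k : 'I_(N i)), j != k ->
     hball (zc i j) (lam * r) `&` hball (zc i k) (lam * r) = set0) /\
  (S `<=` [set z | exists i j, hball (zc i j) r z]).

Definition phi (nu : Cn R n -> Cn R n) (m : R) (c : Cn R n) (z : Cn R n) : R[i] :=
  cexp (- (m%:C) * hprod (c - z) (nu c)).

End Defs.

(* index i in 1..2s  |->  family index (i for i <= s, i - s otherwise),
   implementing z_{i+s,j} = z_{i,j}, F_{i+s} = F_i *)
Definition fold_idx (s : nat) (i : 'I_(s + s)%N) : 'I_s :=
  match fintype.split i with inl a => a | inr b => b end.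

(* Main.v *)
Set Warnings "-all".
Require Import Defs.
From HB Require Import structures.
From mathcomp Require Import all_boot all_order all_algebra.
From mathcomp Require Import complex.
From mathcomp Require Import all_classical all_reals all_analysis.
From mathcomp Require Import ring lra zify.
Import Order.TTheory GRing.Theory Num.Theory.
Import numFieldNormedType.Exports.
Local Open Scope classical_set_scope.
Local Open Scope ring_scope.
Local Open Scope complex_scope.

Import ComplexField.Normc.
Section Aux.
Variable R : realType.

Lemma cabsE (c : R[i]) : cabs c = normc c.
Proof. by case: c. Qed.

Lemma cabs_ge0 (c : R[i]) : 0 <= cabs c.
Proof. by rewrite /cabs sqrtr_ge0. Qed.

Lemma cabsM (a b : R[i]) : cabs (a * b) = cabs a * cabs b.
Proof. by rewrite !cabsE normcM. Qed.

Lemma cabsD (a b : R[i]) : cabs (a + b) <= cabs a + cabs b.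
Proof. by rewrite !cabsE le_normcD. Qed.

Lemma cabs_sum (I : Type) (r : seq I) (P : pred I) (F : I -> R[i]) :
  cabs (\sum_(i <- r | P i) F i) <= \sum_(i <- r | P i) cabs (F i).
Proof.
apply: (big_ind2 (fun a b => cabs a <= b)).
- by rewrite /cabs /= expr0n /= addr0 sqrtr0.
- move=> x1 x2 y1 y2 h1 h2; apply: le_trans (cabsD _ _) _; exact: lerD.
- by [].
Qed.

Lemma cabs_cexp (c : R[i]) : cabs (cexp c) = expR (complex.Re c).
Proof.
rewrite /cabs /cexp /= !exprMn -mulrDr cos2Dsin2 mulr1.
by rewrite sqrtr_sqr ger0_norm // expR_ge0.
Qed.

Lemma Re_mC (m : R) (h : R[i]) : complex.Re (- (m%:C) * h) = - (m * complex.Re h).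
Proof. case: h => a b /=; ring. Qed.

Lemma cabs_phi (n : nat) (nu : Cn R n -> Cn R n) m c z :
  cabs (phi nu m c z) = expR (- (m * complex.Re (hprod (c - z) (nu c)))).
Proof. by rewrite /phi cabs_cexp Re_mC. Qed.

End Aux.
Section Hn.
Variable R : realType.
Variable n : nat.
Implicit Types z w a b : Cn R n.

Lemma coordB1 z w k : (z - w).1 0 k = z.1 0 k - w.1 0 k.
Proof. by rewrite /= !mxE. Qed.
Lemma coordB2 z w k : (z - w).2 0 k = z.2 0 k - w.2 0 k.
Proof. by rewrite /= !mxE. Qed.
Lemma coordZ1 (c : R) z k : (c *: z).1 0 k = c * z.1 0 k.
Proof. by rewrite /= !mxE. Qed.
Lemma coordZ2 (c : R) z k : (c *: z).2 0 k = c * z.2 0 k.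
Proof. by rewrite /= !mxE. Qed.
Lemma coordD1 z w k : (z + w).1 0 k = z.1 0 k + w.1 0 k.
Proof. by rewrite /= !mxE. Qed.
Lemma coordD2 z w k : (z + w).2 0 k = z.2 0 k + w.2 0 k.
Proof. by rewrite /= !mxE. Qed.

Lemma hsum_ge0 z : 0 <= \sum_(k < n) ((z.1 0 k) ^+ 2 + (z.2 0 k) ^+ 2).
Proof. by apply: sumr_ge0 => k _; rewrite addr_ge0 // sqr_ge0. Qed.

Lemma hnorm_ge0 z : 0 <= hnorm z.
Proof. exact: sqrtr_ge0. Qed.

Lemma hnorm2 z : hnorm z ^+ 2 = \sum_(k < n) ((z.1 0 k) ^+ 2 + (z.2 0 k) ^+ 2).
Proof. by rewrite /hnorm sqr_sqrtr // hsum_ge0. Qed.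

Lemma hnorm_coord (c : R) z w :
  (forall k, z.1 0 k = c * w.1 0 k /\ z.2 0 k = c * w.2 0 k) ->
  hnorm z = `|c| * hnorm w.
Proof.
move=> H; rewrite /hnorm.
have -> : \sum_(k < n) ((z.1 0 k) ^+ 2 + (z.2 0 k) ^+ 2) =
          c ^+ 2 * \sum_(k < n) ((w.1 0 k) ^+ 2 + (w.2 0 k) ^+ 2).
  rewrite mulr_sumr; apply: eq_bigr => k _; case: (H k) => -> ->; ring.
by rewrite sqrtrM ?sqr_ge0 // sqrtr_sqr.
Qed.

Lemma hnormBC a b : hnorm (a - b) = hnorm (b - a).
Proof.
rewrite (@hnorm_coord (-1) (a - b) (b - a)) ?normrN ?normr1 ?mul1r //.
by move=> k; rewrite !coordB1 !coordB2; split; ring.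
Qed.

Lemma hball_sep a b (d : R) :
  hball a d `&` hball b d = set0 -> 2 * d <= hnorm (a - b).
Proof.
move=> H; rewrite leNgt; apply/negP => Hlt.
pose x := (2^-1 : R) *: (a + b).
have hxa : hnorm (x - a) = 2^-1 * hnorm (a - b).
  rewrite (@hnorm_coord (- 2^-1) _ (a - b)) ?normrN ?ger0_norm //.
  by move=> k; rewrite !coordB1 !coordB2 !coordZ1 !coordZ2 !coordD1 !coordD2; split; field.
have hxb : hnorm (x - b) = 2^-1 * hnorm (a - b).
  rewrite (@hnorm_coord (2^-1) _ (a - b)) ?ger0_norm //.
  by move=> k; rewrite !coordB1 !coordB2 !coordZ1 !coordZ2 !coordD1 !coordD2; split; field.
have : (hball a d `&` hball b d) x.
  by split; rewrite /hball /= ?hxa ?hxb; lra.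
by rewrite H.
Qed.

End Hn.
Section Pack.
Variable R : realType.
Local Close Scope classical_set_scope.

Lemma sum_inj_le (I J : finType) (e : I -> J) (H : J -> R) :
  injective e -> (forall f, 0 <= H f) -> \sum_i H (e i) <= \sum_f H f.
Proof.
move=> inj H0.
have -> : \sum_i H (e i) = \sum_(f in [set e x | x in [set: I]]) H f.
  rewrite big_imset /=; last by move=> x y _ _; exact: inj.
  by apply: eq_bigl => x; rewrite inE.
rewrite [X in _ <= X](bigID (fun f => f \in [set e x | x in [set: I]])) /=.
by rewrite lerDl; apply: sumr_ge0.
Qed.

Lemma geom_le (q : R) (B : nat) : 0 <= q < 1 -> \sum_(i < B) q ^+ i <= (1 - q)^-1.
Proof.
move=> /andP[q0 q1].
have h : (1 - q) * \sum_(i < B) q ^+ i = 1 - q ^+ B.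
  by have := subrX1 q B; move=> E; rewrite -[LHS]opprK -mulNr opprB -E opprB.
rewrite -[X in _ <= X]mul1r ler_pdivlMr ?subr_gt0 // mulrC h; rewrite lerBlDr lerDl; exact: exprn_ge0.
Qed.

Lemma floor_sqr (t : R) : `|(Num.floor t)%:~R| - 2 <= t ^+ 2 :> R.
Proof.
have /andP[h1 h2] := floor_itv t.
rewrite intrD /= in h2.
set A := (Num.floor t)%:~R : R in h1 h2 *.
case: (leP 0 A) => hA.
- rewrite ger0_norm //; nra.
- rewrite ltr0_norm //; nra.
Qed.

End Pack.
Section Pack2.
Variable R : realType.
Local Close Scope classical_set_scope.

Lemma packing (n : nat) : exists P : R, 0 <= P /\
  forall (N : nat) (p : 'I_N -> Cn R n) (z : Cn R n) (d : R), 0 < d ->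
  (forall j k, j != k -> 2 * d <= hnorm (p j - p k)) ->
  \sum_(j < N) expR (- (hnorm (z - p j) / d) ^+ 2) <= P.
Proof.
pose K : R := (n.+1)%:R.
have K0 : 0 < K by rewrite ltr0n.
pose q : R := expR (- (K ^+ 2)^-1).
have q0 : 0 <= q < 1.
  rewrite expR_ge0 /= -expR0 ltr_expR oppr_lt0 invr_gt0; exact: exprn_gt0.
pose c0 : R := expR (2 * (K ^+ 2)^-1).
pose Gt : R := 2 * c0 * (1 - q)^-1.
have Gt0 : 0 <= Gt.
  rewrite /Gt mulr_ge0 ?mulr_ge0 ?expR_ge0 // invr_ge0 subr_ge0; case/andP: q0 => _ /ltW //.
exists ((Gt ^+ 2) ^+ n); split; first by rewrite exprn_ge0 // sqr_ge0.
move=> N p z d d0 sep.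
pose t1 (j : 'I_N) (k : 'I_n) := (z - p j).1 0 k * K / d.
pose t2 (j : 'I_N) (k : 'I_n) := (z - p j).2 0 k * K / d.
pose G (t : R) := expR (- (t / K) ^+ 2).
have stepA : forall j, expR (- (hnorm (z - p j) / d) ^+ 2) =
    \prod_(k < n) (G (t1 j k) * G (t2 j k)).
  move=> j; rewrite expr_div_n hnorm2 mulr_suml -sumrN expR_sum.
  apply: eq_bigr => k _; rewrite -expRD; congr expR.
  rewrite /t1 /t2; field.
  by rewrite (gt_eqF d0) andbT addrC natr1 pnatr_eq0.
pose a1 j k := Num.floor (t1 j k).
pose a2 j k := Num.floor (t2 j k).
pose B := (\max_(j < N) \max_(k < n) maxn `|a1 j k|%N `|a2 j k|%N)%N.
have hB1 : forall j k, (`|a1 j k| <= B)%N.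
  move=> j k; apply: leq_trans (leq_maxl _ _) _.
  apply: leq_trans (leq_bigmax (F := fun k => maxn `|a1 j k|%N `|a2 j k|%N) k) _.
  exact: (leq_bigmax (F := fun j => \max_(k < n) maxn `|a1 j k|%N `|a2 j k|%N) j).
have hB2 : forall j k, (`|a2 j k| <= B)%N.
  move=> j k; apply: leq_trans (leq_maxr _ _) _.
  apply: leq_trans (leq_bigmax (F := fun k => maxn `|a1 j k|%N `|a2 j k|%N) k) _.
  exact: (leq_bigmax (F := fun j => \max_(k < n) maxn `|a1 j k|%N `|a2 j k|%N) j).
pose enc (a : int) : bool * 'I_B.+1 := (a < 0, inord `|a|%N).
have enc_inj : forall a b : int, (`|a| <= B)%N -> (`|b| <= B)%N -> enc a = enc b -> a = b.
  move=> a b ha hb [] h1 h2; have := congr1 val h2; rewrite /= !inordK ?ltnS //.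
  move: h1; case: (ltP a 0); case: (ltP b 0) => // hb0 ha0 _ e; lia.
pose gh (x : bool * 'I_B.+1) : R := c0 * q ^+ x.2.
have gh0 : forall x, 0 <= gh x by move=> x; rewrite mulr_ge0 ?expR_ge0 ?exprn_ge0 //; case/andP: q0.
have stepB : forall t : R, (`|Num.floor t| <= B)%N -> G t <= gh (enc (Num.floor t)).
  move=> t ht; rewrite /gh /enc /= inordK ?ltnS // /q -expRM_natl /c0 -expRD ler_expR.
  have := @floor_sqr R t; rewrite -intr_norm -natr_absz => h.
  have : (`|Num.floor t|%:R : R) * (K ^+ 2)^-1 <= (t ^+ 2 + 2) * (K ^+ 2)^-1.
    by rewrite ler_wpM2r // ?invr_ge0 ?sqr_ge0 //; lra.
  rewrite expr_div_n mulrDl; move=> hh; rewrite mulrN.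
  move: hh; set X := (K ^+ 2)^-1; set Y := (`|Num.floor t|%:R : R); move=> hh; lra.
pose H (f : {ffun 'I_n -> (bool * 'I_B.+1) * (bool * 'I_B.+1)}) :=
  \prod_(k < n) (gh (f k).1 * gh (f k).2).
pose e j : {ffun 'I_n -> (bool * 'I_B.+1) * (bool * 'I_B.+1)} :=
  [ffun k => (enc (a1 j k), enc (a2 j k))].
have stepC : \sum_(j < N) expR (- (hnorm (z - p j) / d) ^+ 2) <= \sum_(j < N) H (e j).
  apply: ler_sum => j _; rewrite stepA /H; apply: ler_prod => k _.
  rewrite mulr_ge0 ?expR_ge0 //= ffunE /=; apply: ler_pM; rewrite ?expR_ge0 //.
  by apply: stepB; apply: hB1.
  by apply: stepB; apply: hB2.
have stepD : injective e.
  move=> j l Ejl; apply/eqP; rewrite -[_ == _]negbK; apply/negP => njl.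
  have sepjl := sep j l njl.
  have Ek : forall k, a1 j k = a1 l k /\ a2 j k = a2 l k.
    move=> k; have := Ejl; move/ffunP/(_ k); rewrite !ffunE => E.
    split; apply: enc_inj; [apply: hB1|apply: hB1|exact: (congr1 fst E)|
      apply: hB2|apply: hB2|exact: (congr1 snd E)].
  pose y : R := n%:R.
  have y0 : 0 <= y by rewrite ler0n.
  have Ky : K = y + 1 by rewrite /K /y -natr1.
  pose ee : R := d / K.
  have ee0 : 0 < ee by rewrite divr_gt0.
  have dee : d = ee * (y + 1) by rewrite /ee -Ky mulrVK // unitfE (gt_eqF K0).
  have coord1 : forall k, (p j - p l).1 0 k = (t1 l k - t1 j k) * ee.
    move=> k; rewrite /t1 /ee !coordB1; field.
    by rewrite (gt_eqF d0) andbT addrC natr1 pnatr_eq0.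
  have coord2 : forall k, (p j - p l).2 0 k = (t2 l k - t2 j k) * ee.
    move=> k; rewrite /t2 /ee !coordB2; field.
    by rewrite (gt_eqF d0) andbT addrC natr1 pnatr_eq0.
  have diff : forall (u v : R), Num.floor u = Num.floor v -> (u - v) ^+ 2 <= 1.
    move=> u v Euv; have /andP[u1 u2] := floor_itv u; have /andP[v1 v2] := floor_itv v.
    rewrite Euv intrD in u1 u2; rewrite intrD in v2.
    move: u1 u2 v1 v2; set A := (Num.floor v)%:~R : R => u1 u2 v1 v2; nra.
  have hs : hnorm (p j - p l) ^+ 2 <= y * (2 * ee ^+ 2).
    rewrite hnorm2.
    apply: le_trans (_ : \sum_(k < n) (2 * ee ^+ 2) <= _).
      have H2 : forall a b : R, a^+2 <= 1 -> b^+2 <= 1 -> (a*ee)^+2 + (b*ee)^+2 <= 2 * ee^+2.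
        move=> a b ha hb; rewrite [(a * _)^+2]exprMn [(b * _)^+2]exprMn -mulrDl; apply: ler_wpM2r; [exact: sqr_ge0 | lra].
      apply: ler_sum => k _; rewrite coord1 coord2; apply: H2; apply: diff.
        exact: (esym (proj1 (Ek k))).
      exact: (esym (proj2 (Ek k))).
    by rewrite sumr_const card_ord /y (mulr_natl _ n) lexx.
  have hn0 := @hnorm_ge0 R n (p j - p l).
  move: sepjl hs; rewrite dee; nra.
apply: le_trans stepC _.
apply: le_trans (@sum_inj_le R _ _ e H stepD _) _.
  by move=> f; apply: prodr_ge0 => k _; apply: mulr_ge0.
have -> : \sum_f H f = \prod_(k < n) \sum_(x : (bool * 'I_B.+1) * (bool * 'I_B.+1)) (gh x.1 * gh x.2).
  by rewrite bigA_distr_bigA.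
have hS : \sum_(u : bool * 'I_B.+1) gh u <= Gt.
  rewrite -(pair_bigA _ (fun b (i : 'I_B.+1) => gh (b, i))) /= big_bool /=.
  rewrite /gh /= -mulr_sumr /Gt -mulrA mulr2n mulrDl.
  have hg := @geom_le R q B.+1 q0.
  have c00 : 0 <= c0 by rewrite expR_ge0.
  by apply: lerD; rewrite mul1r; apply: ler_wpM2l.
have hS0 : 0 <= \sum_(u : bool * 'I_B.+1) gh u by apply: sumr_ge0.
rewrite -[in X in _ <= X](card_ord n) -prodr_const; apply: ler_prod => k _.
rewrite sumr_ge0 /=; last by move=> x _; apply: mulr_ge0.
rewrite -(pair_bigA _ (fun u v => gh u * gh v)) /= -big_distrlr /= expr2.
by apply: ler_pM.
Qed.
End Pack2.
Section Main.
Variable R : realType.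

Lemma choose_mr (alpha2 r1 lambda u r0 M : R) : 0 < alpha2 -> 0 < r1 -> 0 < lambda ->
  0 < u -> 0 < r0 -> exists m r : R, M < m /\ 0 < r < r0 /\ lambda * r < r1 /\
  m * (alpha2 * r ^+ 2) = u /\ 0 < m.
Proof.
move=> a0 r10 l0 u0 r00.
pose s := Num.sqrt (u / (alpha2 * (`|M| + 1))).
have M0 : 0 < `|M| + 1 by rewrite ltr_pwDr.
have s0 : 0 < s by rewrite sqrtr_gt0 divr_gt0 // mulr_gt0.
pose r := Num.min (Num.min (r0 / 2) (r1 / (2 * lambda))) s.
have r0' : 0 < r by rewrite !lt_min s0 !divr_gt0 ?mulr_gt0.
have rr0 : r <= r0 / 2 by rewrite /r !ge_min lexx.
have rr1 : r <= r1 / (2 * lambda) by rewrite /r !ge_min lexx orbT.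
have rs : r <= s by rewrite /r ge_min lexx orbT.
have A0 : 0 < alpha2 * r ^+ 2 by rewrite mulr_gt0 // exprn_gt0.
have AM : alpha2 * r ^+ 2 * (`|M| + 1) <= u.
  have : r ^+ 2 <= s ^+ 2 by rewrite ler_pXn2r ?nnegrE ?(ltW r0') ?(ltW s0).
  move=> h; rewrite sqr_sqrtr in h; last first.
    by rewrite divr_ge0 ?mulr_ge0 // ltW.
  have e : u / (alpha2 * (`|M|+1)) * (alpha2 * (`|M|+1)) = u.
    by rewrite divrK // unitfE gt_eqF // mulr_gt0.
  have := ler_wpM2r (ltW (mulr_gt0 a0 M0)) h; rewrite e => h2.
  suff -> : alpha2 * r ^+ 2 * (`|M| + 1) = r ^+ 2 * (alpha2 * (`|M| + 1)) by [].
  ring.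
exists (u / (alpha2 * r ^+ 2)), r; split; last split; last split; last split.
- have hM := ler_norm M.
  rewrite ltr_pdivlMr //.
  apply: lt_le_trans AM; rewrite mulrC ltr_pM2l //; lra.
- apply/andP; split => //; lra.
- move: rr1; rewrite ler_pdivlMr ?mulr_gt0 // => h; nra.
- by rewrite mulrVK // unitfE (gt_eqF A0).
- by rewrite divr_gt0.
Qed.

Lemma term_bound (m a1 d dl Re : R) : 0 < dl -> dl <= d -> 1 <= m * a1 * dl ^+ 2 ->
  a1 * d ^+ 2 <= Re -> 0 <= m -> 0 <= a1 ->
  - (m * Re) <= 1 - m * a1 * dl ^+ 2 - (d / dl) ^+ 2.
Proof.
move=> dl0 hd hL hRe m0 a0.
set x := (d / dl) ^+ 2.
have dx : d ^+ 2 = x * dl ^+ 2 by rewrite /x expr_div_n mulrVK // unitfE expf_neq0 // gt_eqF.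
have x1 : 1 <= x.
  rewrite /x expr_div_n ler_pdivlMr ?exprn_gt0 // mul1r.
  have d0 : 0 <= d := le_trans (ltW dl0) hd.
  by rewrite ler_pXn2r ?nnegrE ?(ltW dl0).
have h1 : m * (a1 * d ^+ 2) <= m * Re by apply: ler_wpM2l.
set L := m * a1 * dl ^+ 2 in hL *.
have : m * (a1 * d ^+ 2) = L * x by rewrite dx /L; ring.
nra.
Qed.

End Main.

Lemma sum_sub_le (R : realType) (I : finType) (P : pred I) (f : I -> R) :
  (forall i, 0 <= f i) -> \sum_(i | P i) f i <= \sum_i f i.
Proof.
move=> f0; rewrite [X in _ <= X](bigID P) /= lerDl; exact: sumr_ge0.
Qed.

Lemma hnorm_zz (R : realType) (n : nat) (z : Cn R n) : hnorm (z - z) = 0.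
Proof.
rewrite (@hnorm_coord R n 0 (z - z) z) ?normr0 ?mul0r //.
by move=> k; rewrite coordB1 coordB2 !subrr !mul0r.
Qed.

Theorem lemma2p3 (R : realType) (n : nat) (D : set (Cn R n))
  (nu : Cn R n -> Cn R n) (alpha1 alpha2 r1 : R) (s : nat) :
  is_domain D -> hbounded D -> strictly_convex D ->
  C2_boundary_outward_normal D nu ->
  0 < alpha1 -> 0 < alpha2 -> 0 < r1 ->
  (* Re<w - z, nu(w)> >= alpha1 ||z - w||^2 for w in S, z in closure D, dist(z, bD) < r1 *)
  (forall w z, bdry D w -> topology_structure.closure D z ->
     (exists w', bdry D w' /\ hnorm (z - w') < r1) ->
     alpha1 * hnorm (z - w) ^+ 2 <= complex.Re (hprod (w - z) (nu w))) ->
  (* Re<w - z, nu(w)> <= alpha2 ||z - w||^2 for z, w in S *)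
  (forall z w, bdry D z -> bdry D w ->
     complex.Re (hprod (w - z) (nu w)) <= alpha2 * hnorm (z - w) ^+ 2) ->
  (* the covering property defining s *)
  (forall r : R, 0 < r -> exists (N : 'I_s -> nat) (zc : forall i : 'I_s, 'I_(N i) -> Cn R n),
     ball_families (bdry D) (4 * Num.sqrt (alpha2 / alpha1)) r zc) ->
  let lambda := 4 * Num.sqrt (alpha2 / alpha1) in
  exists C : R, 0 < C /\
  exists eta0 : R, 0 < eta0 /\
  forall eta : R, 0 < eta < eta0 ->
  (* moreover: r arbitrarily small and m arbitrarily large *)
  forall r0 M : R, 0 < r0 ->
  exists m r : R, M < m /\ 0 < r < r0 /\ lambda * r < r1 /\
  forall (N : 'I_s -> nat) (zc : forall i : 'I_s, 'I_(N i) -> Cn R n),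
    ball_families (bdry D) lambda r zc ->
  forall beta : forall i : 'I_(s + s)%N, 'I_(N (fold_idx i)) -> R[i],
    (forall i j, cabs (beta i j) <= 1) ->
  forall i : 'I_(s + s)%N,
    let g := fun z => \sum_(j < N (fold_idx i)) beta i j * phi nu m (zc (fold_idx i) j) z in
    (* (a) *)
    (forall z, bdry D z -> (forall j, ~ hball (zc (fold_idx i) j) (lambda * r) z) ->
       cabs (g z) < eta) /\
    (* (b) *)
    (forall j z, topology_structure.closure D z -> hball (zc (fold_idx i) j) (lambda * r) z ->
       cabs (g z - beta i j * phi nu m (zc (fold_idx i) j) z) < eta) /\
    (* (c) *)
    (forall j z, bdry D z -> hball (zc (fold_idx i) j) r z ->
       C * eta `^ (1 / 16) <= cabs (phi nu m (zc (fold_idx i) j) z)) /\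
    (* (d) *)
    (forall j z, topology_structure.closure D z -> hsphere (zc (fold_idx i) j) (lambda * r) z ->
       cabs (phi nu m (zc (fold_idx i) j) z) < eta `^ (2 / 3)).
Proof.
move=> _ _ _ _ a10 a20 r10 Ha1 Ha2 _ lambda.
have [P [P0 HP]] := @packing R n.
pose K : R := (P + 2) / 16.
have K0 : 0 < K by rewrite divr_gt0 //; lra.
exists (expR (- K)); split; first exact: expR_gt0.
exists 1; split; first exact: ltr01.
move=> eta /andP[eta0 eta1] r0 M r00.
have lneta : ln eta < 0 by apply: ln_lt0; rewrite eta0 eta1.
pose u : R := - ln eta / 16 + K.
have u0 : 0 < u by rewrite /u; lra.
have l0 : 0 < lambda by rewrite /lambda mulr_gt0 // sqrtr_gt0 divr_gt0.
have l2 : lambda ^+ 2 * alpha1 = 16 * alpha2.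
  rewrite /lambda exprMn sqr_sqrtr ?divr_ge0 ?(ltW a10) ?(ltW a20) //.
  by field; rewrite (gt_eqF a10).
have [m [r [Mm [/andP[r0' rr0] [lr1 [mu m0]]]]]] :=
  @choose_mr R alpha2 r1 lambda u r0 M a20 r10 l0 u0 r00.
exists m, r; split => //; split; first by rewrite r0' rr0.
split => //.
move=> N zc [Hin [Hdisj _]] beta Hbeta i g.
pose dl := lambda * r.
have dl0 : 0 < dl by rewrite mulr_gt0.
have L_eq : m * alpha1 * dl ^+ 2 = 16 * u.
  transitivity (m * (lambda ^+ 2 * alpha1) * r ^+ 2); first by rewrite /dl; ring.
  by rewrite l2 -mu; ring.
have L1 : 1 <= m * alpha1 * dl ^+ 2 by rewrite L_eq /u /K; lra.
have sep : forall j k, j != k -> 2 * dl <= hnorm (zc (fold_idx i) j - zc (fold_idx i) k).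
  by move=> j k h; apply: hball_sep; apply: Hdisj.
have tb : forall z k, topology_structure.closure D z ->
    (exists w', bdry D w' /\ hnorm (z - w') < r1) ->
    dl <= hnorm (z - zc (fold_idx i) k) ->
    cabs (beta i k * phi nu m (zc (fold_idx i) k) z) <=
    expR (1 - 16 * u) * expR (- (hnorm (z - zc (fold_idx i) k) / dl) ^+ 2).
  move=> z k Hcl Hex hd; rewrite cabsM cabs_phi.
  apply: le_trans (_ : _ <= 1 * expR (- (m * complex.Re (hprod (zc (fold_idx i) k - z)
     (nu (zc (fold_idx i) k)))))) _.
    apply: ler_wpM2r; [exact: expR_ge0 | exact: Hbeta].
  rewrite mul1r -expRD ler_expR -L_eq.
  apply: term_bound => //; [exact: Ha1 | exact: ltW | exact: ltW].
have fin : expR (1 - 16 * u) * P < eta.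
  have e1 : 1 - 16 * u = ln eta + - (P + 1) by rewrite /u /K; lra.
  rewrite e1 expRD lnK ?posrE // -mulrA gtr_pMr // expRN.
  rewrite mulrC ltr_pdivrMr ?expR_gt0 // mul1r.
  have := expR_ge1Dx (P + 1); lra.
have sb : forall z (Q : pred 'I_(N (fold_idx i))), topology_structure.closure D z ->
    (exists w', bdry D w' /\ hnorm (z - w') < r1) ->
    (forall k, Q k -> dl <= hnorm (z - zc (fold_idx i) k)) ->
    cabs (\sum_(k | Q k) beta i k * phi nu m (zc (fold_idx i) k) z) < eta.
  move=> z Q Hcl Hex HQ.
  apply: le_lt_trans (@cabs_sum R _ _ _ _) _.
  apply: le_lt_trans (_ : _ <= \sum_(k | Q k) expR (1 - 16 * u) *
     expR (- (hnorm (z - zc (fold_idx i) k) / dl) ^+ 2)) _.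
    by apply: ler_sum => k Qk; apply: tb => //; apply: HQ.
  rewrite -mulr_sumr; apply: le_lt_trans fin.
  apply: ler_wpM2l; first exact: expR_ge0.
  apply: le_trans (@sum_sub_le R _ _ _ _) (HP _ (zc (fold_idx i)) z dl dl0 sep).
  by move=> k; exact: expR_ge0.
split; last split; last split.
- move=> z Hz Hout; rewrite /g.
  case: (Hz) => Hcl _.
  apply: (sb z xpredT) => //.
    by exists z; split => //; rewrite hnorm_zz.
  by move=> k _; rewrite leNgt; apply/negP => h; exact: (Hout k h).
- move=> j z Hcl Hb; rewrite /g (bigD1 j) //= addrC addrK.
  apply: (sb z (fun k => k != j)) => //.
    exists (zc (fold_idx i) j); split; first exact: Hin.
    exact: lt_trans Hb lr1.
  move=> k kj; rewrite leNgt; apply/negP => h.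
  have jk : j != k by rewrite eq_sym.
  have E := Hdisj (fold_idx i) j k jk.
  have : (hball (zc (fold_idx i) j) (lambda * r) `&` hball (zc (fold_idx i) k) (lambda * r)) z.
    by split.
  by rewrite E.
- move=> j z Hz Hb; rewrite cabs_phi.
  have Hre := Ha2 z (zc (fold_idx i) j) Hz (Hin _ j).
  rewrite /powR (gt_eqF eta0) -expRD ler_expR.
  have hn0 := @hnorm_ge0 R n (z - zc (fold_idx i) j).
  have h2 : hnorm (z - zc (fold_idx i) j) ^+ 2 <= r ^+ 2.
    rewrite ler_pXn2r ?nnegrE ?hn0 ?(ltW r0') //; exact: ltW Hb.
  have h3 : m * complex.Re (hprod (zc (fold_idx i) j - z) (nu (zc (fold_idx i) j))) <=
      m * (alpha2 * r ^+ 2).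
    apply: ler_wpM2l; first exact: ltW.
    apply: le_trans Hre _; apply: ler_wpM2l => //; exact: ltW.
  rewrite mu /u in h3; lra.
- move=> j z Hcl Hs; rewrite cabs_phi.
  rewrite /powR (gt_eqF eta0) ltr_expR.
  have Hex : exists w', bdry D w' /\ hnorm (z - w') < r1.
    exists (zc (fold_idx i) j); split; first exact: Hin.
    by rewrite Hs.
  have h := Ha1 (zc (fold_idx i) j) z (Hin _ j) Hcl Hex.
  rewrite Hs -/dl in h.
  have h3 : m * (alpha1 * dl ^+ 2) <=
      m * complex.Re (hprod (zc (fold_idx i) j - z) (nu (zc (fold_idx i) j))).
    apply: ler_wpM2l => //; exact: ltW.
  rewrite mulrA L_eq /u /K in h3; lra.
Qed.
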